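(* Let $p$ be a POP of length $k\geq 1$ and let $0\leq i\leq s\leq k$ be such that every label in $$I=\{1,2,\ldots,i\}\cup\{k-s+i+1,\,k-s+i+2,\ldots,k\}$$ is isolated in $p$ (incomparable to every other label). Let $p_1$ be the POP of length $k-s$ obtained from $p$ by deleting the labels in $I$ and relabeling the remaining labels $i+1,\ldots,k-s+i$ as $1,\ldots,k-s$ in an order-preserving way (i.e. label $j$ becomes $j-i$), keeping the order relations among them. Let $a(n)=|S_n(p)|$ and $b(n)=|S_n(p_1)|$. Then $a(n)=n!$ for $n<k$ and $$a(n)=\frac{n!}{(n-s)!}\,b(n-s)\quad\text{for } n\geq k.$$
   Context: An $n$-permutation is a word $\pi=\pi_1\cdots\pi_n$ containing each of $1,\ldots,n$ exactly once; $S_n$ is the set of $n$-permutations ($S_0$ consists of the empty permutation). A partially ordered pattern (POP) $p$ of length $k$ is a partial order $\prec$ on the label set $\{1,\ldots,k\}$ (for $k=0$ it is the empty pattern, contained in every permutation). An $n$-permutation $\pi$ contains $p$ if there are indices $1\leq i_1<\cdots<i_k\leq n$ such that $\pi_{i_j}<\pi_{i_m}$ whenever $j\prec m$ (no condition between incomparable labels); otherwise $\pi$ avoids $p$. $S_n(p)$ denotes the set of $n$-permutations avoiding $p$. *)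

(* Defs.v *)
From mathcomp Require Import all_boot all_order all_fingroup.
Set Implicit Arguments. Unset Strict Implicit. Unset Printing Implicit Defensive.

(* A POP of length k: a strict partial order on the label set 'I_k
   (labels 1..k of the paper are 0..k-1 here). [p a b] means a ≺ b. *)
Definition is_pop (k : nat) (p : rel 'I_k) : Prop :=
  irreflexive p /\ transitive p.

Definition contains (k n : nat) (p : rel 'I_k) (sigma : 'S_n) : bool :=
  [exists f : {ffun 'I_k -> 'I_n},
    [forall a : 'I_k, forall b : 'I_k, (a < b) ==> (f a < f b)] &&
    [forall a : 'I_k, forall b : 'I_k, p a b ==> (sigma (f a) < sigma (f b))]].

Definition avoids (k n : nat) (p : rel 'I_k) (sigma : 'S_n) : bool :=
  ~~ contains p sigma.

Definition num_avoid (k : nat) (p : rel 'I_k) (n : nat) : nat :=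
  #|[set sigma : 'S_n | avoids p sigma]|.

Definition isolated (k : nat) (p : rel 'I_k) (l : 'I_k) : Prop :=
  forall j : 'I_k, j != l -> ~~ p l j /\ ~~ p j l.

Definition nat_rel (k : nat) (p : rel 'I_k) : rel nat :=
  fun x y => match insub x, insub y with
             | Some a, Some b => p a b
             | _, _ => false
             end.

(* The POP of length k - s obtained by deleting labels 0..i-1 and
   k-s+i..k-1 and relabelling label j (i <= j < k-s+i) as j - i. *)
Definition restrict_pop (k : nat) (p : rel 'I_k) (i s : nat) : rel 'I_(k - s) :=
  fun a b => nat_rel p (val a + i) (val b + i).
Arguments restrict_pop {k} p i s.

(* Main.v *)
Require Import Defs.
From mathcomp Require Import all_boot all_order all_fingroup zify.
Set Implicit Arguments. Unset Strict Implicit. Unset Printing Implicit Defensive.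

Definition pop_of (k : nat) (R : rel nat) : rel 'I_k := fun a b => R a b.
Arguments pop_of k R : clear implicits.

Definition sv n (s : 'S_n) (x : nat) : nat :=
  if (insub x : option 'I_n) is Some a then val (s a) else 0.

Lemma svE n (s : 'S_n) (a : 'I_n) : sv s a = s a.
Proof. by rewrite /sv valK. Qed.

Lemma insub_ord k x (H : x < k) : (insub x : option 'I_k) = Some (Ordinal H).
Proof. by rewrite insubT. Qed.

Lemma containsP k n (R : rel nat) (s : 'S_n) :
  reflect (exists h : nat -> nat,
    [/\ (forall a b, a < b -> b < k -> h a < h b),
        (forall a, a < k -> h a < n) &
        (forall a b, a < k -> b < k -> R a b -> sv s (h a) < sv s (h b))])
  (contains (pop_of k R) s).
Proof.
apply: (iffP existsP).
- move=> [f /andP[/forallP Hm /forallP Hp]].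
  exists (fun x => if (insub x : option 'I_k) is Some a then val (f a) else 0).
  split.
  + move=> a b ab bk; have ak : a < k by apply: ltn_trans bk.
    rewrite (insub_ord ak) (insub_ord bk).
    move: (Hm (Ordinal ak)) => /forallP /(_ (Ordinal bk)) /implyP /(_ ab) HH; exact: HH.
  + by move=> a ak; rewrite (insub_ord ak) ltn_ord.
  + move=> a b ak bk Rab; rewrite (insub_ord ak) (insub_ord bk) !svE.
    by move: (Hp (Ordinal ak)) => /forallP /(_ (Ordinal bk)) /implyP /(_ Rab) HH; exact: HH.
- move=> [h [H1 H2 H3]].
  exists [ffun a : 'I_k => Ordinal (H2 _ (ltn_ord a))].
  apply/andP; split; apply/forallP=> a; apply/forallP=> b; apply/implyP => ab;
    rewrite !ffunE /=.
  + exact: H1.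
  + by rewrite -!svE /=; apply: H3.
Qed.
Lemma count_lift n (i0 : 'I_n.+1) (A : pred 'S_n.+1) (B : pred 'S_n) :
  (forall j t, A (lift_perm i0 j t) = B t) ->
  #|[set s | A s]| = n.+1 * #|[set t | B t]|.
Proof.
move=> HAB.
pose F := fun x : 'I_n.+1 * 'S_n => lift_perm i0 x.1 x.2.
have Finj : injective F.
  move=> [j1 t1] [j2 t2]; rewrite /F /= => E.
  have ej : j1 = j2 by rewrite -(lift_perm_id i0 j1 t1) E lift_perm_id.
  subst j2; congr pair; apply/permP=> m; apply: (@lift_inj _ j1).
  by rewrite -!(lift_perm_lift i0) E.
have Fonto : forall s, s \in codom F.
  by apply: inj_card_onto => //; rewrite card_prod card_ord !card_Sn factS.
transitivity #|[set x : 'I_n.+1 * 'S_n | B x.2]|.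
  rewrite -(card_imset _ Finj); apply: eq_card => s; rewrite inE.
  apply/idP/imsetP.
  - move=> As; have /codomP[x Ex] := Fonto s.
    by exists x => //; rewrite inE -(HAB x.1); move: As; rewrite Ex.
  - by move=> [x]; rewrite inE => Bx ->; rewrite /F HAB.
have -> : [set x : 'I_n.+1 * 'S_n | B x.2] = setX [set: 'I_n.+1] [set t | B t].
  by apply/setP => -[j t]; rewrite !inE.
by rewrite cardsX cardsT card_ord.
Qed.

Lemma ltn_bump2 h x y : (bump h x < bump h y) = (x < y).
Proof. rewrite /bump; do 2 case: leqP => ?; rewrite /= ?add1n ?add0n; lia. Qed.

Lemma sv_lift0 n j (t : 'S_n) x : x < n ->
  sv (lift_perm ord0 j t) x.+1 = bump j (sv t x).
Proof.
move=> xn; have -> : x.+1 = nat_of_ord (lift ord0 (Ordinal xn)) by [].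
by rewrite svE lift_perm_lift /= -(svE t (Ordinal xn)).
Qed.

Lemma sv_lift0_0 n j (t : 'S_n) : sv (lift_perm ord0 j t) 0 = j.
Proof. by have -> : 0 = nat_of_ord (ord0 : 'I_n.+1) by []; rewrite svE lift_perm_id. Qed.

Lemma sv_liftm n j (t : 'S_n) x : x < n ->
  sv (lift_perm ord_max j t) x = bump j (sv t x).
Proof.
move=> xn; have -> : sv (lift_perm ord_max j t) x =
    sv (lift_perm ord_max j t) (lift ord_max (Ordinal xn)).
  by rewrite /= /bump leqNgt xn.
by rewrite svE lift_perm_lift /= -(svE t (Ordinal xn)).
Qed.

Lemma sv_liftm_n n j (t : 'S_n) : sv (lift_perm ord_max j t) n = j.
Proof.
have -> : sv (lift_perm ord_max j t) n = sv (lift_perm ord_max j t) (ord_max : 'I_n.+1) by [].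
by rewrite svE lift_perm_id.
Qed.

Lemma step_left k n (R : rel nat) :
  (forall y, y < k.+1 -> ~~ R 0 y && ~~ R y 0) ->
  num_avoid (pop_of k.+1 R) n.+1 =
  n.+1 * num_avoid (pop_of k (fun x y => R x.+1 y.+1)) n.
Proof.
move=> iso; rewrite /num_avoid /avoids; apply: (count_lift (A := fun s => ~~ contains (pop_of k.+1 R) s)
  (B := fun s => ~~ contains (pop_of k (fun x y => R x.+1 y.+1)) s) (i0 := ord0)) => j t.
congr (~~ _); apply/containsP/containsP.
- move=> [h [H1 H2 H3]].
  have pos : forall a, a < k -> 0 < h a.+1.
    by move=> a ak; have := H1 0 a.+1 erefl ak; lia.
  have bd : forall a, a < k -> (h a.+1).-1 < n.
    by move=> a ak; have := H2 a.+1 ak; have := pos a ak; lia.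
  exists (fun x => (h x.+1).-1); split.
  + move=> a b ab bk; have := H1 a.+1 b.+1 ab bk; have := pos a (ltn_trans ab bk); lia.
  + exact: bd.
  + move=> a b ak bk Rab; have := H3 a.+1 b.+1 ak bk Rab.
    rewrite -(prednK (pos a ak)) -(prednK (pos b bk)).
    by rewrite !sv_lift0 ?bd // ltn_bump2.
- move=> [h [H1 H2 H3]].
  exists (fun x => if x is x'.+1 then (h x').+1 else 0); split.
  + by move=> [|a] [|b] //= ab bk; rewrite ltnS; apply: H1.
  + by move=> [|a] //= ak; rewrite ltnS; apply: H2.
  + move=> [|a] [|b] ak bk.
    * by have /andP[/negbTE -> _] := iso 0 ak.
    * by have /andP[/negbTE -> _] := iso _ bk.
    * by have /andP[_ /negbTE ->] := iso _ ak.
    * move=> Rab; rewrite (sv_lift0 _ _ (H2 a ak)) (sv_lift0 _ _ (H2 b bk)).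
      by rewrite ltn_bump2; apply: H3.
Qed.

Lemma step_right k n (R : rel nat) :
  (forall y, y < k.+1 -> ~~ R k y && ~~ R y k) ->
  num_avoid (pop_of k.+1 R) n.+1 = n.+1 * num_avoid (pop_of k R) n.
Proof.
move=> iso; rewrite /num_avoid /avoids; apply: (count_lift (A := fun s => ~~ contains (pop_of k.+1 R) s)
  (B := fun s => ~~ contains (pop_of k R) s) (i0 := ord_max)) => j t.
congr (~~ _); apply/containsP/containsP.
- move=> [h [H1 H2 H3]].
  have bd : forall a, a < k -> h a < n.
    by move=> a ak; have := H1 a k ak (ltnSn k); have := H2 k (ltnSn k); lia.
  exists h; split.
  + by move=> a b ab bk; apply: H1 => //; apply: ltnW.
  + exact: bd.
  + move=> a b ak bk Rab; have := H3 _ _ (ltnW ak) (ltnW bk) Rab.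
    by rewrite !sv_liftm ?bd // ltn_bump2.
- move=> [h [H1 H2 H3]].
  exists (fun x => if x < k then h x else n); split.
  + move=> a b ab bk; have ak : a < k.+1 by apply: ltn_trans bk.
    case: (ltnP a k) => a_k; case: (ltnP b k) => b_k.
    * exact: H1.
    * exact: H2.
    * lia.
    * lia.
  + by move=> a ak; case: (ltnP a k) => a_k //; apply: ltnW; apply: H2.
  + move=> a b ak bk; case: (ltnP a k) => a_k; case: (ltnP b k) => b_k.
    * move=> Rab; rewrite (sv_liftm _ _ (H2 a a_k)) (sv_liftm _ _ (H2 b b_k)).
      by rewrite ltn_bump2; apply: H3.
    * have eb : b = k by lia.
      by subst b; have /andP[_ /negbTE ->] := iso _ ak.
    * have ea : a = k by lia.
      by subst a; have /andP[/negbTE -> _] := iso _ bk.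
    * have ea : a = k by lia.
      by subst a; have /andP[/negbTE -> _] := iso _ bk.
Qed.

From Stdlib Require Import FunctionalExtensionality.

Lemma main s : forall i k (R : rel nat) n, i <= s -> s <= k -> k <= n ->
  (forall l, l < k -> (l < i) || (k - s + i <= l) ->
     forall y, y < k -> ~~ R l y && ~~ R y l) ->
  num_avoid (pop_of k R) n =
  n ^_ s * num_avoid (pop_of (k - s) (fun x y => R (x + i) (y + i))) (n - s).
Proof.
elim: s => [|s IH] i k R n.
- move=> i0 _ _ _; have -> : i = 0 by lia.
  rewrite ffactn0 mul1n !subn0.
  have -> : (fun x y => R (x + 0) (y + 0)) = R.
    by do 2 apply: functional_extensionality => ?; rewrite !addn0.
  by [].
- move=> isn skn kn iso.
  case: k skn kn iso => [|k] // skn kn iso.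
  case: n kn => [|n] // kn.
  rewrite !subSS ffactSS -mulnA.
  case: i isn iso => [|i] isn iso.
  + rewrite step_right; last first.
      move=> y yk; apply: iso => //; apply/orP; right; lia.
    congr (_ * _); apply: IH => //.
    move=> l lk /orP[//|H] y yk; apply: iso; try lia.
  + rewrite step_left; last first.
      move=> y yk; apply: iso => //.
    congr (_ * _); rewrite (IH i) //.
    * congr (_ * num_avoid (pop_of _ _) _).
      by do 2 apply: functional_extensionality => ?; rewrite !addnS.
    * by move=> l lk H y yk; apply: iso; try lia.
Qed.

Lemma nat_relE k (p : rel 'I_k) : pop_of k (nat_rel p) = p.
Proof.
do 2 apply: functional_extensionality => ?.
by rewrite /pop_of /nat_rel !valK.
Qed.

Theorem theorem2p4 (k : nat) (p : rel 'I_k) (i s : nat) :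
  1 <= k -> is_pop p -> i <= s -> s <= k ->
  (forall l : 'I_k, (val l < i) || (k - s + i <= val l) -> isolated p l) ->
  (forall n, n < k -> num_avoid p n = n`!) /\
  (forall n, k <= n ->
     num_avoid p n = n`! %/ (n - s)`! * num_avoid (restrict_pop p i s) (n - s)).
Proof.
move=> k1 [irr _] isn sk iso; split.
- move=> n nk; rewrite /num_avoid -card_Sn; apply: eq_card => sg.
  rewrite !inE /avoids; apply/negP => /existsP[f /andP[/forallP Hm _]].
  have finj : injective f.
    move=> a b fab; apply/eqP; apply/negPn/negP => ab.
    case: (ltngtP a b) => [lt|lt|/val_inj //].
    + by have := Hm a => /forallP /(_ b) /implyP /(_ lt); rewrite fab ltnn.
    + by have := Hm b => /forallP /(_ a) /implyP /(_ lt); rewrite fab ltnn.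
    + by move/eqP: ab.
  by have := leq_card f finj; rewrite !card_ord; lia.
- move=> n kn; rewrite -(ffact_factd (leq_trans sk kn)).
  rewrite -{1}(nat_relE p) (@main s i) //.
  move=> l lk H y yk.
  rewrite /nat_rel (insub_ord lk) (insub_ord yk).
  have [e|ne] := eqVneq (Ordinal yk) (Ordinal lk); first by rewrite e irr.
  by have [-> ->] := iso (Ordinal lk) H (Ordinal yk) ne.
Qed.
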